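(* Let $\mathcal S$ be a finite set, let $\kappa$ be a real symmetric $\mathcal S\times\mathcal S$ matrix with nonnegative entries, and let $\mu,c\in(0,\infty)^{\mathcal S}$ with $c_i<\mu_i$ for all $i$. Assume $D_c^{-1}-\kappa$ is positive definite, and set $\Phi=(D_c^{-1}-\kappa)^{-1}$, \[ A_0=(I-\kappa D_c)\,D_{\mu-c}^{-1}\,(I-D_\mu\kappa),\qquad A=\tfrac12(A_0+A_0^T). \] Assume $|c|-\tfrac12\langle c,\kappa c\rangle>0$ and that the matrix $\Phi-\frac{cc^T}{|c|-\frac12\langle c,\kappa c\rangle}$ is positive definite, and let \[ B=\Bigl(\Phi-\frac{cc^T}{|c|-\frac12\langle c,\kappa c\rangle}\Bigr)^{-1}. \] Then $A+B$ is positive definite.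
   Context: For a vector $x\in\mathbb R^{\mathcal S}$, $D_x$ denotes the diagonal matrix with diagonal entries $x_i$; $|c|=\sum_{i\in\mathcal S}c_i$ is the $\ell_1$-norm; $\langle\cdot,\cdot\rangle$ is the Euclidean inner product; $I$ is the identity matrix. *)

(* Defs.v *)
From mathcomp Require Import all_boot all_order all_algebra.
Set Implicit Arguments. Unset Strict Implicit. Unset Printing Implicit Defensive.
Import Order.TTheory GRing.Theory Num.Theory.
Local Open Scope ring_scope.

(* The finite index set S is represented by 'I_n. *)

Definition Dg (R : ringType) (n : nat) (x : 'cV[R]_n) : 'M[R]_n :=
  \matrix_(i, j) (x i 0 *+ (i == j)).

Definition l1 (R : numDomainType) (n : nat) (x : 'cV[R]_n) : R :=
  \sum_i `|x i 0|.

Definition inner (R : ringType) (n : nat) (x y : 'cV[R]_n) : R :=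
  \sum_i x i 0 * y i 0.

Definition posdef (R : numDomainType) (n : nat) (M : 'M[R]_n) : Prop :=
  M^T = M /\ forall x : 'cV[R]_n, x != 0 -> 0 < (x^T *m M *m x) 0 0.

(* Main.v *)
Require Import Defs.
From mathcomp Require Import all_boot all_order all_algebra.
From mathcomp Require Import ring lra.
Import Order.TTheory GRing.Theory Num.Theory.
Local Open Scope ring_scope.

Set Implicit Arguments. Unset Strict Implicit.
Section H.
Variable R : realFieldType.

Lemma DgE n (x : 'cV[R]_n) : Dg x = diag_mx x^T.
Proof. by apply/matrixP=> i j; rewrite !mxE. Qed.

Lemma DgM n m (x : 'cV[R]_n) (M : 'M[R]_(n, m)) i j :
  (Dg x *m M) i j = x i 0 * M i j.
Proof. by rewrite DgE mul_diag_mx !mxE. Qed.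

Lemma MDg n m (x : 'cV[R]_m) (M : 'M[R]_(n, m)) i j :
  (M *m Dg x) i j = M i j * x j 0.
Proof. by rewrite DgE mul_mx_diag !mxE. Qed.

Lemma nz_vec n (y : 'cV[R]_n) : y != 0 -> exists i, y i 0 != 0.
Proof.
move=> Hy; case: (pickP (fun i => y i 0 != 0)) => [i Hi|H]; first by exists i.
case/negP: Hy; apply/eqP/matrixP => i j; rewrite (ord1 j) mxE.
by apply/eqP; move: (H i) => /negbFE.
Qed.

Lemma posdef_unit n (M : 'M[R]_n) :
  (forall x : 'cV[R]_n, x != 0 -> 0 < (x^T *m M *m x) 0 0) -> M \in unitmx.
Proof.
move=> H; rewrite unitmxE unitfE; apply/negP => /det0P [v v0 vM].
have /H : v^T != 0.
  by apply: contra v0 => /eqP h; apply/eqP; apply: trmx_inj; rewrite h trmx0.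
by rewrite trmxK vM mul0mx mxE ltxx.
Qed.

Lemma quad_diag n (g y : 'cV[R]_n) :
  (y^T *m Dg g *m y) 0 0 = \sum_i g i 0 * y i 0 ^+ 2.
Proof.
rewrite mxE; apply: eq_bigr => i _; rewrite MDg !mxE; ring.
Qed.

Lemma quad_diag_pos n (g y : 'cV[R]_n) :
  (forall i, 0 < g i 0) -> y != 0 -> 0 < (y^T *m Dg g *m y) 0 0.
Proof.
move=> Hg /nz_vec [i Hi]; rewrite quad_diag (bigD1 i) //=.
have h1 : 0 < g i 0 * y i 0 ^+ 2 by rewrite mulr_gt0 // exprn_even_gt0.
have h2 : 0 <= \sum_(j | j != i) g j 0 * y j 0 ^+ 2.
  apply: sumr_ge0 => j _; apply: mulr_ge0; first exact: ltW.
  exact: sqr_ge0.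
by apply: (lt_le_trans h1); rewrite lerDl.
Qed.

Lemma quad_tr n (x : 'cV[R]_n) (M : 'M[R]_n) : (x^T *m M^T *m x) 0 0 = (x^T *m M *m x) 0 0.
Proof.
have -> : x^T *m M^T *m x = (x^T *m M *m x)^T by rewrite !trmx_mul trmxK mulmxA.
by rewrite mxE.
Qed.

Lemma quadD n (x : 'cV[R]_n) (M N : 'M[R]_n) : (x^T *m (M + N) *m x) 0 0 = (x^T *m M *m x) 0 0 + (x^T *m N *m x) 0 0.
Proof. by rewrite mulmxDr mulmxDl mxE. Qed.

Lemma quadB n (x : 'cV[R]_n) (M N : 'M[R]_n) : (x^T *m (M - N) *m x) 0 0 = (x^T *m M *m x) 0 0 - (x^T *m N *m x) 0 0.
Proof. by rewrite mulmxBr mulmxBl !mxE. Qed.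

Lemma quadZ n (x : 'cV[R]_n) a (M : 'M[R]_n) : (x^T *m (a *: M) *m x) 0 0 = a * (x^T *m M *m x) 0 0.
Proof. by rewrite -scalemxAr -scalemxAl mxE. Qed.

Lemma DgMx n m (x : 'cV[R]_n) (M : 'M[R]_(n, m)) :
  Dg x *m M = \matrix_(i, j) (x i 0 * M i j).
Proof. by apply/matrixP => i j; rewrite DgM mxE. Qed.

Lemma MxDg n m (x : 'cV[R]_m) (M : 'M[R]_(n, m)) :
  M *m Dg x = \matrix_(i, j) (M i j * x j 0).
Proof. by apply/matrixP => i j; rewrite MDg mxE. Qed.

Lemma sc00 (a : R) (M : 'M[R]_1) : (a *: M) 0 0 = a * M 0 0.
Proof. by rewrite mxE. Qed.

End H.

Theorem mainTheorem4 (R : realFieldType) (n : nat)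
  (kappa : 'M[R]_n) (mu c : 'cV[R]_n) :
  kappa^T = kappa ->
  (forall i j, 0 <= kappa i j) ->
  (forall i, 0 < mu i 0) -> (forall i, 0 < c i 0) ->
  (forall i, c i 0 < mu i 0) ->
  let Dcinv := Dg (map_mx (fun t => t^-1) c) in
  posdef (Dcinv - kappa) ->
  let Phi := invmx (Dcinv - kappa) in
  let A0 := (1%:M - kappa *m Dg c) *m Dg (map_mx (fun t => t^-1) (mu - c))
            *m (1%:M - Dg mu *m kappa) in
  let A := 2^-1 *: (A0 + A0^T) in
  let q := l1 c - 2^-1 * inner c (kappa *m c) in
  0 < q ->
  posdef (Phi - q^-1 *: (c *m c^T)) ->
  let B := invmx (Phi - q^-1 *: (c *m c^T)) in
  posdef (A + B).
Proof.
move=> Hk Hk0 Hmu Hc Hcm Dcinv.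
set P := Dcinv - kappa.
move=> [PT Ppos] Phi A0 A q Hq.
set N := Phi - q^-1 *: (c *m c^T).
move=> [NT Npos] B.
have PU : P \in unitmx := posdef_unit Ppos.
have NU : N \in unitmx := posdef_unit Npos.
split.
  rewrite linearD /= /A linearZ /= linearD /= trmxK addrC /B trmx_inv NT addrC; congr (_ + _).
  by rewrite addrC.
pose g : 'cV[R]_n := \col_i (c i 0 * mu i 0 / (mu i 0 - c i 0)).
have stepa : 1%:M - kappa *m Dg c = P *m Dg c.
  rewrite /P mulmxBl; congr (_ - _).
  apply/matrixP => i j; rewrite MDg !mxE.
  have [<-|ne] := eqVneq i j; rewrite ?mulr1n ?mulr0n ?mul0r //.
  by rewrite mulVf // gt_eqF.
have stepb : Dg c *m (Dg (map_mx (fun t => t^-1) (mu - c)) *m (1%:M - Dg mu *m kappa))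
    = Dg g *m P - 1%:M.
  rewrite /P /Dcinv !DgMx.
  apply/matrixP => i j; rewrite !mxE.
  have hc := Hc i; have hm := Hcm i.
  have h1 : c i 0 != 0 by rewrite gt_eqF.
  have h2 : mu i 0 - c i 0 != 0 by rewrite gt_eqF // subr_gt0.
  have [<-|ne] := eqVneq i j; rewrite ?mulr1n ?mulr0n; field; by rewrite ?h1 ?h2.
have hA0 : A0 = P *m Dg g *m P - P.
  by rewrite /A0 stepa -!mulmxA stepb mulmxBr mulmx1 !mulmxA.
pose v := P *m c.
pose s := 2^-1 * inner c (kappa *m c).
pose t := (c^T *m v) 0 0.
have ht : t = q - s.
  rewrite /t /v mulmxA /P quadB quad_diag /q /s /l1.
  have -> : (c^T *m kappa *m c) 0 0 = inner c (kappa *m c).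
    by rewrite -mulmxA mxE; apply: eq_bigr => i _; rewrite !mxE.
  have -> : \sum_i map_mx (fun t => t^-1) c i 0 * c i 0 ^+ 2 = \sum_i `|c i 0|.
    apply: eq_bigr => i _; rewrite mxE gtr0_norm //.
    by rewrite expr2 mulrA mulVf ?mul1r // gt_eqF.
  by field.
have hs0 : 0 <= s.
  rewrite /s; apply: mulr_ge0; first by rewrite invr_ge0 ler0n.
  rewrite /inner.
  apply: sumr_ge0 => i _; apply: mulr_ge0; first exact: ltW (Hc i).
  rewrite mxE.
  by apply: sumr_ge0 => j _; apply: mulr_ge0; [exact: Hk0 | exact: ltW (Hc j)].
have hPhic : Phi *m v = c by rewrite /v mulmxA mulVmx // mul1mx.
have hcTP : c^T *m P = v^T by rewrite /v trmx_mul PT.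
have hctv : c^T *m v = t%:M by rewrite {1}(mx11_scalar (c^T *m v)).
move=> x Hx.
have [i0 _] := nz_vec Hx.
have vNZ : v != 0.
  apply/eqP => v0; have := Hc i0.
  by rewrite -hPhic v0 mulmx0 mxE ltxx.
have hsP : 0 < s.
  rewrite lt_def hs0 andbT; apply/eqP => s0.
  have Nv : N *m v = 0.
    rewrite /N mulmxBl hPhic -scalemxAl -mulmxA hctv mul_mx_scalar scalerA.
    have -> : q^-1 * t = 1 by rewrite ht s0 subr0 mulVf // gt_eqF.
    by rewrite scale1r subrr.
  have := Npos v vNZ.
  by rewrite -mulmxA Nv mulmx0 mxE ltxx.
have hsn : s != 0 by rewrite gt_eqF.
have hqn : q != 0 by rewrite gt_eqF.
pose C := P + s^-1 *: (v *m v^T).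
have key : N *m C = 1%:M.
  rewrite /N /C mulmxDr !mulmxBl mulVmx // -!scalemxAr -!scalemxAl !mulmxA mulVmx // mul1mx -(mulmxA (c *m c^T) P c) -/v.
  rewrite -(mulmxA c c^T P) hcTP -(mulmxA c c^T v) hctv mul_mx_scalar -scalemxAl !scalerA.
  apply/matrixP => i j; rewrite !mxE ht.
  by field; rewrite hqn hsn.
have hB : B = C.
  by rewrite /B -[invmx N]mulmx1 -key mulmxA mulVmx // mul1mx.
have hPx : P *m x != 0.
  apply/eqP => h; move: Hx.
  by rewrite -(mul1mx x) -(mulVmx PU) -mulmxA h mulmx0 eqxx.
have hQ1 : 0 < (x^T *m (P *m Dg g *m P) *m x) 0 0.
  have -> : x^T *m (P *m Dg g *m P) *m x = (P *m x)^T *m Dg g *m (P *m x).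
    by rewrite trmx_mul PT !mulmxA.
  apply: quad_diag_pos => // i.
  rewrite mxE; apply: divr_gt0; first exact: mulr_gt0.
  by rewrite subr_gt0.
have hQv : 0 <= (x^T *m (v *m v^T) *m x) 0 0.
  have e : x^T *m v = (v^T *m x)^T by rewrite trmx_mul trmxK.
  rewrite mulmxA -(mulmxA (x^T *m v)) mxE big_ord1 e mxE.
  by rewrite -expr2 sqr_ge0.
have hQv' : 0 <= s^-1 * (x^T *m (v *m v^T) *m x) 0 0.
  by rewrite mulr_ge0 // invr_ge0 ltW.
rewrite (quadD x A B) /A -(scalemxAr (2^-1) x^T (A0 + A0^T)) -(scalemxAl (2^-1) (x^T *m (A0 + A0^T)) x) sc00 (quadD x A0 A0^T) quad_tr hA0 (quadB x (P *m Dg g *m P) P) hB /C (quadD x P (s^-1 *: (v *m v^T))) -(scalemxAr s^-1 x^T (v *m v^T)) -(scalemxAl s^-1 (x^T *m (v *m v^T)) x) sc00.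
lra.
Qed.
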